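(* Let $A,B$ be nonzero finite-dimensional $K$-subspaces of $L$. Then there exist a $K$-subspace $S$ of $\langle AB\rangle$ and a (possibly skew) subfield $H$ of $L$ with $K\subset H\subset L$ and $\dim_KH$ finite, such that $$\dim_KS\geq\dim_KA+\dim_KB-\dim_KH,$$ and either $HS=S$ or $SH=S$.
   Context: $K$ is a commutative field and $L$ is a (possibly noncommutative) division ring containing $K$ in its center. For $S\subset L$, $\langle S\rangle$ denotes the $K$-subspace of $L$ spanned by $S$. For subsets $S_1,S_2$ of $L$, $S_1S_2=\{s_1s_2\mid s_1\in S_1,s_2\in S_2\}$ (product set). *)

(* Defs.v *)
From HB Require Import structures.
From mathcomp Require Import all_boot all_order all_algebra.
Set Implicit Arguments. Unset Strict Implicit. Unset Printing Implicit Defensive.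
Import GRing.Theory.
Local Open Scope ring_scope.

Section LinDefs.
Variables (K : fieldType) (V : lmodType K).

Definition subspace (A : V -> Prop) : Prop :=
  A 0 /\ forall (a : K) (u v : V), A u -> A v -> A (a *: u + v).

Definition lin_indep (s : seq V) : Prop :=
  forall c : 'I_(size s) -> K,
    \sum_(i < size s) c i *: s`_i = 0 -> forall i, c i = 0.

Definition span_seq (s : seq V) : V -> Prop :=
  fun v => exists c : 'I_(size s) -> K, v = \sum_(i < size s) c i *: s`_i.

Definition spanK (X : V -> Prop) : V -> Prop :=
  fun v => exists s : seq V, (forall x, x \in s -> X x) /\ span_seq s v.

Definition has_dim (A : V -> Prop) (d : nat) : Prop :=
  exists s : seq V, [/\ lin_indep s, size s = d & forall v, A v <-> span_seq s v].

End LinDefs.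

Section RingDefs.
Variables (K : fieldType) (L : algType K).

Definition prodset (S1 S2 : L -> Prop) : L -> Prop :=
  fun x => exists s1 s2, [/\ S1 s1, S2 s2 & x = s1 * s2].

Definition skew_subfield_over_K (H : L -> Prop) : Prop :=
  [/\ forall k : K, H (k%:A),
      forall x y, H x -> H y -> H (x - y),
      forall x y, H x -> H y -> H (x * y)
    & forall x, H x -> x != 0 -> exists y, [/\ H y, x * y = 1 & y * x = 1]].

End RingDefs.

(* Main.v *)
Require Import Defs.
From HB Require Import structures.
From mathcomp Require Import all_boot all_order all_algebra.
From Stdlib Require Import Classical Lia.
Ltac arith := intros; repeat match goal with H : is_true (leq _ _) |- _ => apply (elimT leP) in H end;
  try apply/leP; unfold addn, subn, muln, addn_rec, subn_rec, muln_rec in *; lia.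
Import GRing.Theory.
Local Open Scope ring_scope.

Set Implicit Arguments. Unset Strict Implicit.
Section Lin.
Variables (K : fieldType) (V : lmodType K).
Implicit Types (s t : seq V) (P Q X : V -> Prop).

Lemma sub0 P : subspace P -> P 0.
Proof. by case. Qed.
Lemma subD P u v : subspace P -> P u -> P v -> P (u + v).
Proof. by case=> _ h pu pv; have := h 1 u v pu pv; rewrite scale1r. Qed.
Lemma subZ P a u : subspace P -> P u -> P (a *: u).
Proof. by move=> [h0 h] pu; have := h a u 0 pu h0; rewrite addr0. Qed.
Lemma subN P u : subspace P -> P u -> P (- u).
Proof. by move=> hP pu; rewrite -scaleN1r; apply: subZ. Qed.
Lemma subB P u v : subspace P -> P u -> P v -> P (u - v).
Proof. by move=> hP pu pv; apply: subD => //; apply: subN. Qed.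

Lemma sp_nil v : span_seq (@nil V) v <-> v = 0.
Proof.
split=> [[c ->]|->]; first by rewrite big_ord0.
by exists (fun _ => 0); rewrite big_ord0.
Qed.

Lemma sp_cons x s v :
  span_seq (x :: s) v <-> exists a w, span_seq s w /\ v = a *: x + w.
Proof.
split.
- case=> c ->; rewrite big_ord_recl /=.
  exists (c ord0), (\sum_(i < size s) c (lift ord0 i) *: s`_i); split=> //.
  by exists (fun i => c (lift ord0 i)).
- case=> a [w [[c ->] ->]].
  exists (fun i : 'I_(size s).+1 => if unlift ord0 i is Some j then c j else a).
  rewrite big_ord_recl /= unlift_none; congr (_ + _).
  by apply: eq_bigr => i _; rewrite liftK.
Qed.

Lemma sp_subspace s : subspace (span_seq s).
Proof.
split; first by exists (fun _ => 0); rewrite big1 // => i _; rewrite scale0r.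
move=> a u v [c ->] [d ->]; exists (fun i => a * c i + d i).
rewrite scaler_sumr -big_split /=; apply: eq_bigr => i _.
by rewrite scalerDl scalerA.
Qed.

Lemma sp_sub s P : subspace P -> (forall x, x \in s -> P x) ->
  forall v, span_seq s v -> P v.
Proof.
move=> hP; elim: s => [|x s IH] hs v.
  by move=> hv; rewrite (proj1 (sp_nil v) hv); apply: sub0.
case/sp_cons=> a [w [hw ->]]; apply: subD => //.
  by apply: subZ => //; apply: hs; rewrite inE eqxx.
by apply: IH => // y hy; apply: hs; rewrite inE hy orbT.
Qed.

Lemma sp_mem s x : x \in s -> span_seq s x.
Proof.
elim: s => [|y s IH] //; rewrite inE => /orP[/eqP ->|hx]; apply/sp_cons.
  by exists 1, 0; split; [exact: sub0 (sp_subspace s) | rewrite scale1r addr0].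
by exists 0, x; split; [apply: IH | rewrite scale0r add0r].
Qed.

Lemma indep_nil : lin_indep (@nil V).
Proof. by move=> c _ [i]. Qed.

Definition ext {n} (c : 'I_n -> K) (a : K) : 'I_n.+1 -> K :=
  fun j => if unlift ord0 j is Some k then c k else a.
Lemma ext0 n (c : 'I_n -> K) a : ext c a ord0 = a.
Proof. by rewrite /ext unlift_none. Qed.
Lemma extS n (c : 'I_n -> K) a i : ext c a (lift ord0 i) = c i.
Proof. by rewrite /ext liftK. Qed.

Lemma sum_cons x s (c : 'I_(size s).+1 -> K) :
  \sum_(i < size (x :: s)) c i *: (x :: s)`_i
  = c ord0 *: x + \sum_(i < size s) c (lift ord0 i) *: s`_i.
Proof. by rewrite big_ord_recl; congr (_ + _); apply: eq_bigr => i _; rewrite lift0. Qed.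

Lemma indep_cons x s : lin_indep (x :: s) <-> lin_indep s /\ ~ span_seq s x.
Proof.
split.
- move=> h; split.
  + move=> c hc i.
    have := h (ext c 0); rewrite sum_cons ext0 scale0r add0r.
    under eq_bigr => j _ do rewrite extS.
    by move=> /(_ hc (lift ord0 i)); rewrite extS.
  + case=> c hx.
    have := h (ext (fun i => - c i) 1); rewrite sum_cons ext0 scale1r.
    under eq_bigr => j _ do rewrite extS scaleNr.
    rewrite sumrN -hx subrr => /(_ erefl ord0); rewrite ext0 => /eqP.
    by rewrite oner_eq0.
- case=> hs hx c; rewrite sum_cons => hc.
  set w := \sum_(i < size s) _ in hc.
  have hw : span_seq s w by exists (fun i => c (lift ord0 i)).
  have c0 : c ord0 = 0.
    apply/eqP; apply/negP => /negP nz; apply: hx.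
    have -> : x = (- (c ord0)^-1) *: w.
      rewrite scaleNr -scalerN; apply: (canRL (scalerK nz)).
      by apply/eqP; rewrite -addr_eq0 hc.
    by apply: subZ => //; apply: sp_subspace.
  move: hc; rewrite c0 scale0r add0r => hc.
  move=> i; case: (unliftP ord0 i) => [j ->|->] //.
  by apply: hs hc j.
Qed.


Definition psi s (r : 'rV[K]_(size s)) : V := \sum_(i < size s) r 0 i *: s`_i.
Arguments psi : clear implicits.

Lemma psiD s a r1 r2 : psi s (a *: r1 + r2) = a *: psi s r1 + psi s r2.
Proof.
rewrite /psi scaler_sumr -big_split; apply: eq_bigr => i _.
by rewrite !mxE scalerDl scalerA.
Qed.

Lemma psi0 s : psi s 0 = 0.
Proof. by rewrite /psi big1 // => i _; rewrite mxE scale0r. Qed.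

Lemma span_psi s v : span_seq s v <-> exists r, v = psi s r.
Proof.
split=> [[c ->]|[r ->]].
  by exists (\row_i c i); rewrite /psi; apply: eq_bigr => i _; rewrite mxE.
by exists (fun i => r 0 i).
Qed.

Lemma psi_span s (cs : seq 'rV[K]_(size s)) r :
  (r \in <<cs>>)%VS -> span_seq (map (psi s) cs) (psi s r).
Proof.
elim: cs r => [|c cs IH] r.
  by rewrite span_nil memv0 => /eqP ->; rewrite psi0; apply/sp_nil.
rewrite span_cons => /memv_addP [u /vlineP [k ->] [w hw ->]].
apply/sp_cons; exists k, (psi s w); split; first exact: IH.
by rewrite psiD.
Qed.

Lemma indep_free s t (cs : seq 'rV[K]_(size s)) :
  lin_indep t -> t = map (psi s) cs -> free cs.
Proof.
elim: cs t => [|c cs IH] t ht dt; first exact: nil_free.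
rewrite dt in ht; move/indep_cons: ht => [h1 h2].
rewrite free_cons (IH _ h1 erefl) andbT.
by apply/negP => hc; apply: h2; apply: psi_span.
Qed.

Lemma to_psi s t : (forall x, x \in t -> span_seq s x) ->
  exists cs : seq 'rV[K]_(size s), t = map (psi s) cs.
Proof.
elim: t => [|x t IH] h; first by exists [::].
have [cs ->] := IH (fun y hy => h y (ltac:(by rewrite inE hy orbT))).
have [r ->] := proj1 (span_psi s x) (h x (mem_head _ _)).
by exists (r :: cs).
Qed.

Lemma steinitz s t : lin_indep t -> (forall x, x \in t -> span_seq s x) ->
  (size t <= size s)%N.
Proof.
move=> ht hs; have [cs def] := to_psi hs.
have fc := indep_free ht def.
rewrite def size_map -(eqP fc).
apply: leq_trans (dimvS (subvf _)) _.
by rewrite dimvf dim_matrix mul1r.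
Qed.

Lemma fd_sub s P : subspace P -> (forall v, P v -> span_seq s v) ->
  exists t, [/\ lin_indep t, (size t <= size s)%N & forall v, P v <-> span_seq t v].
Proof.
elim: s P => [|x s IH] P hP hs.
  exists [::]; split=> //; first exact: indep_nil.
  move=> v; split=> [/hs //|/sp_nil ->]; exact: sub0.
case: (classic (forall v, P v -> span_seq s v)) => [h|h].
  have [t [ht hsz hPt]] := IH P hP h.
  by exists t; split=> //; apply: leqW.
have [p [Pp np]] : exists p, P p /\ ~ span_seq s p.
  apply: NNPP => hn; apply: h => v Pv; apply: NNPP => nv; apply: hn.
  by exists v.
pose P' := fun v => P v /\ span_seq s v.
have hP' : subspace P'.
  split; first by split; [apply: sub0 | apply: sub0 (sp_subspace s)].
  by move=> a u v [? ?] [? ?]; split; [case: hP => _; apply | case: (sp_subspace s) => _; apply].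
have [t [ht hsz hP't]] := IH P' hP' (fun v h => h.2).
exists (p :: t); split=> //.
- apply/indep_cons; split=> // /hP't [].
  by move=> _ /np.
- move=> v; split=> [Pv|].
  + have [a [w [hw hv]]] := proj1 (sp_cons _ _ _) (hs v Pv).
    have [b [w0 [hw0 hp]]] := proj1 (sp_cons _ _ _) (hs p Pp).
    have bnz : b != 0.
      apply/eqP => b0; apply: np; by rewrite hp b0 scale0r add0r.
    have e : v - (a / b) *: p = w - (a / b) *: w0.
      by rewrite hv hp scalerDr scalerA divfK // opprD addrACA subrr add0r.
    have hu : P' (v - (a / b) *: p).
      split; first by apply: subB => //; apply: subZ.
      by rewrite e; apply: subB; [exact: sp_subspace | done | apply: subZ => //; exact: sp_subspace].
    apply/sp_cons; exists (a / b), (v - (a / b) *: p); split; first exact/hP't.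
    by rewrite addrC subrK.
  + case/sp_cons=> k [u [hu ->]]; apply: subD => //; first exact: subZ.
    by case: (proj2 (hP't u) hu).
Qed.

Lemma has_dim_sub P d : has_dim P d -> subspace P.
Proof.
case=> s [_ _ h]; split; first by apply/h; apply: sub0 (sp_subspace s).
move=> a u v /h hu /h hv; apply/h; case: (sp_subspace s) => _; exact.
Qed.

Lemma has_dim_ext P Q d : has_dim P d -> (forall v, P v <-> Q v) -> has_dim Q d.
Proof. by case=> s [h1 h2 h3] e; exists s; split=> // v; rewrite -e. Qed.

Lemma dim_le_span P d s : has_dim P d -> (forall v, P v -> span_seq s v) -> (d <= size s)%N.
Proof.
case=> t [ht <- h] hs; apply: steinitz => // x hx.
by apply: hs; apply/h; apply: sp_mem.
Qed.

Lemma dim_le P Q dp dq : has_dim P dp -> has_dim Q dq ->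
  (forall v, P v -> Q v) -> (dp <= dq)%N.
Proof.
move=> hp [s [_ <- h]] sub; apply: (dim_le_span hp) => v /sub /h //.
Qed.

Lemma dim_uniq P d1 d2 : has_dim P d1 -> has_dim P d2 -> d1 = d2.
Proof. by move=> h1 h2; apply/eqP; rewrite eqn_leq !(dim_le h1 h2) ?(dim_le h2 h1). Qed.

Lemma dim_ex P Q dq : subspace P -> has_dim Q dq -> (forall v, P v -> Q v) ->
  exists dp, has_dim P dp /\ (dp <= dq)%N.
Proof.
move=> hP [s [_ <- h]] sub.
have [t [ht hsz e]] := fd_sub hP (fun v pv => proj1 (h v) (sub v pv)).
by exists (size t); split=> //; exists t.
Qed.

Lemma dim_lt P Q dp dq v : has_dim P dp -> has_dim Q dq ->
  (forall v, P v -> Q v) -> Q v -> ~ P v -> (dp < dq)%N.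
Proof.
move=> [t [ht <- ht']] [s [_ <- hs]] sub Qv nPv.
have : lin_indep (v :: t) by apply/indep_cons; split=> // /ht'.
move/steinitz => /(_ s) /=; apply => x; rewrite inE => /orP[/eqP ->|hx].
  exact/hs.
by apply/hs; apply: sub; apply/ht'; apply: sp_mem.
Qed.

Lemma dim_eq_sub P Q d : has_dim P d -> has_dim Q d ->
  (forall v, P v -> Q v) -> forall v, Q v -> P v.
Proof.
move=> hP hQ sub v Qv; apply: NNPP => nP.
by have := dim_lt hP hQ sub Qv nP; rewrite ltnn.
Qed.

Lemma dim0 P v : has_dim P 0 -> P v -> v = 0.
Proof. by case=> [[|x s]] [_ // _ h] /h /sp_nil. Qed.

Lemma has_dim_nz P d : has_dim P d -> (0 < d)%N -> exists v, P v /\ v != 0.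
Proof.
case=> [[|x s]] [hi <- h] // _; exists x; split; first by apply/h; apply: sp_mem; rewrite inE eqxx.
apply/eqP => x0; move/indep_cons: hi => [_]; apply; rewrite x0.
exact: sub0 (sp_subspace s).
Qed.

Lemma dim_zero : has_dim (fun v : V => v = 0) 0.
Proof. by exists [::]; split=> //; [exact: indep_nil | move=> v; rewrite sp_nil]. Qed.

Definition addsp P Q := fun v => exists p q, [/\ P p, Q q & v = p + q].
Definition cap P Q := fun v => P v /\ Q v.

Lemma addsp_sub P Q : subspace P -> subspace Q -> subspace (addsp P Q).
Proof.
move=> hP hQ; split; first by exists 0, 0; rewrite addr0; split=> //; apply: sub0.
move=> a u v [p [q [Pp Qq ->]]] [p' [q' [Pp' Qq' ->]]].
exists (a *: p + p'), (a *: q + q'); split.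
- by case: hP => _; apply.
- by case: hQ => _; apply.
- by rewrite scalerDr addrACA.
Qed.

Lemma cap_sub P Q : subspace P -> subspace Q -> subspace (cap P Q).
Proof.
move=> [h0 h] [h0' h']; split=> // a u v [? ?] [? ?]; split; [exact: h | exact: h'].
Qed.

Lemma sp_cat s1 s2 v1 v2 : span_seq s1 v1 -> span_seq s2 v2 -> span_seq (s1 ++ s2) (v1 + v2).
Proof.
move=> h1 h2; apply: subD; first exact: sp_subspace.
- by apply: (sp_sub (sp_subspace _)) h1 => x hx; apply: sp_mem; rewrite mem_cat hx.
- by apply: (sp_sub (sp_subspace _)) h2 => x hx; apply: sp_mem; rewrite mem_cat hx orbT.
Qed.

Lemma grass_span P dp w : has_dim P dp -> exists dw ds dc,
  [/\ has_dim (span_seq w) dw, has_dim (addsp P (span_seq w)) ds,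
      has_dim (cap P (span_seq w)) dc & (dp + dw <= ds + dc)%N].
Proof.
move=> hPd; have hP := has_dim_sub hPd.
have [tp [_ _ htp]] := hPd.
have ex_dims : forall w, exists dw ds dc, [/\ has_dim (span_seq w) dw,
    has_dim (addsp P (span_seq w)) ds & has_dim (cap P (span_seq w)) dc].
  move=> w'.
  have [dw [hdw _]] := fd_sub (sp_subspace w') (fun v h => h).
  have [ds [hds _]] : exists ds, has_dim (addsp P (span_seq w')) ds /\ (ds <= size (tp ++ w'))%N.
    have sub_ps : forall v, addsp P (span_seq w') v -> span_seq (tp ++ w') v.
      by move=> v [p [q [Pp Qq ->]]]; apply: sp_cat => //; apply/htp.
    have [t [ht hsz e]] := fd_sub (addsp_sub hP (sp_subspace w')) sub_ps.
    by exists (size t); split=> //; exists t.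
  have [dc [hdc _]] := dim_ex (cap_sub hP (sp_subspace w')) hPd (fun v h => h.1).
  by exists (size dw), ds, dc; split=> //; exists dw; split=> //; case: hdw.
elim: w => [|x w IH].
  have [dw [ds [dc [h1 h2 h3]]]] := ex_dims [::].
  exists dw, ds, dc; split=> //.
  have -> : dw = 0%N by apply: dim_uniq h1 _; apply: has_dim_ext dim_zero _ => v; rewrite sp_nil.
  rewrite addn0; apply: leq_trans (leq_addr _ _).
  apply: dim_le hPd h2 _ => v Pv; exists v, 0; rewrite addr0; split=> //; exact/sp_nil.
have [dw' [ds' [dc' [h1' h2' h3' hle]]]] := IH.
have [dw [ds [dc [h1 h2 h3]]]] := ex_dims (x :: w).
exists dw, ds, dc; split=> //.
have sW : forall v, span_seq w v -> span_seq (x :: w) v.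
  by move=> v hv; apply/sp_cons; exists 0, v; rewrite scale0r add0r.
have mS : (ds' <= ds)%N.
  apply: dim_le h2' h2 _ => v [p [q [Pp Qq ->]]]; exists p, q; split=> //; exact: sW.
have mC : (dc' <= dc)%N by apply: dim_le h3' h3 _ => v [Pv Qv]; split=> //; exact: sW.
have mW : (dw <= dw' + 1)%N.
  have [s [_ ss hs]] := h1'.
  rewrite -ss addn1; apply: (dim_le_span (s := x :: s) h1) => v /sp_cons [a [u [hu ->]]].
  by apply/sp_cons; exists a, u; split=> //; exact/hs.
case: (classic (span_seq w x)) => xW.
  have : (dw <= dw')%N.
    apply: dim_le h1 h1' _ => v /sp_cons [a [u [hu ->]]].
    by apply: subD; [exact: sp_subspace | apply: subZ => //; exact: sp_subspace | done].
  by arith.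
case: (classic (addsp P (span_seq w) x)) => xPW.
  case: xPW => p [u [Pp hu ex]].
  have : (dc' < dc)%N.
    apply: (dim_lt (v := p) h3' h3) => //.
    - by move=> v [Pv Qv]; split=> //; exact: sW.
    - split=> //; have -> : p = x - u by rewrite ex addrK.
      apply: subB; first exact: sp_subspace.
      + exact: sp_mem (mem_head _ _).
      + exact: sW.
    - case=> _ pW; apply: xW; rewrite ex; apply: subD => //; exact: sp_subspace.
  by arith.
have : (ds' < ds)%N.
  apply: (dim_lt (v := x) h2' h2) => //.
  - by move=> v [p [q [Pp Qq ->]]]; exists p, q; split=> //; exact: sW.
  - exists 0, x; rewrite add0r; split=> //; first exact: sub0.
    exact: sp_mem (mem_head _ _).
by arith.
Qed.

Lemma grass P Q dp dq : has_dim P dp -> has_dim Q dq -> exists ds dc,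
  [/\ has_dim (addsp P Q) ds, has_dim (cap P Q) dc & (dp + dq <= ds + dc)%N].
Proof.
move=> hP hQ; have [tq [_ _ e]] := hQ.
have [dw [ds [dc [h1 h2 h3 hle]]]] := grass_span tq hP.
have -> : dq = dw by apply: dim_uniq hQ _; apply: has_dim_ext h1 _ => v; rewrite e.
exists ds, dc; split=> //.
- apply: has_dim_ext h2 _ => v; split=> -[p [q [Pp Qq ->]]]; exists p, q; split=> //; exact/e.
- apply: has_dim_ext h3 _ => v; split=> -[Pv Qv]; split=> //; exact/e.
Qed.

Lemma dim_pos P d v : has_dim P d -> P v -> v != 0 -> (0 < d)%N.
Proof.
move=> h Pv nz; case: d h => // h; move: nz; by rewrite (dim0 h Pv) eqxx.
Qed.

Definition img (f : V -> V) P := fun x => exists p, P p /\ x = f p.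

Section Img.
Variable f : V -> V.
Hypothesis hf : forall a u v, f (a *: u + v) = a *: f u + f v.
Hypothesis finj : injective f.

Lemma f0 : f 0 = 0.
Proof.
have h := hf 1 0 0; rewrite !scale1r addr0 in h.
by apply: (addrI (f 0)); rewrite addr0 -h.
Qed.

Lemma img_sub P : subspace P -> subspace (img f P).
Proof.
move=> hP; split; first by exists 0; split; [apply: sub0 | rewrite f0].
move=> a u v [p [Pp ->]] [q [Pq ->]]; exists (a *: p + q); split; last by rewrite hf.
by case: hP => _; apply.
Qed.

Lemma span_map t x : span_seq (map f t) x <-> exists p, span_seq t p /\ x = f p.
Proof.
elim: t x => [|y t IH] x /=.
  rewrite sp_nil; split=> [->|[p [/sp_nil -> ->]]]; last exact: f0.
  by exists 0; split; [apply/sp_nil | rewrite f0].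
rewrite sp_cons; split.
  case=> a [w [/IH [p [hp ->]] ->]]; exists (a *: y + p); split; last by rewrite hf.
  by apply/sp_cons; exists a, p.
case=> p [/sp_cons [a [w [hw ->]]] ->]; exists a, (f w); split; last by rewrite hf.
by apply/IH; exists w.
Qed.

Lemma indep_map t : lin_indep t -> lin_indep (map f t).
Proof.
elim: t => [|y t IH] /=; first by move=> _; exact: indep_nil.
move/indep_cons=> [ht hy]; apply/indep_cons; split; first exact: IH.
by move/span_map=> [p [hp /finj e]]; apply: hy; rewrite e.
Qed.

Lemma img_dim P d : has_dim P d -> has_dim (img f P) d.
Proof.
case=> t [ht <- h]; exists (map f t); split; [exact: indep_map | by rewrite size_map|].
move=> x; rewrite span_map; split=> -[p [hp ->]]; exists p; split=> //; exact/h.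
Qed.
End Img.

Lemma spanK_sub X : subspace (spanK X).
Proof.
split; first by exists [::]; split=> //; apply/sp_nil.
move=> a u v [s1 [h1 hu]] [s2 [h2 hv]]; exists (s1 ++ s2); split.
  by move=> x; rewrite mem_cat => /orP[/h1|/h2].
apply: sp_cat => //; apply: subZ => //; exact: sp_subspace.
Qed.

Lemma spanK_mem X x : X x -> spanK X x.
Proof.
move=> hx; exists [:: x]; split; first by move=> y; rewrite inE => /eqP ->.
by apply: sp_mem; rewrite inE eqxx.
Qed.

Lemma spanK_min X Q : subspace Q -> (forall x, X x -> Q x) ->
  forall x, spanK X x -> Q x.
Proof.
move=> hQ hX x [s [hs hx]]; apply: (sp_sub hQ) hx => y /hs; exact: hX.
Qed.
End Lin.

Section Alg.
Variables (K : fieldType) (L : algType K).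
Hypothesis hdiv : forall x : L, x != 0 -> exists y : L, x * y = 1 /\ y * x = 1.
Implicit Types (A B S P Q : L -> Prop).

Lemma linR (y : L) a u v : (a *: u + v) * y = a *: (u * y) + v * y.
Proof. by rewrite mulrDl scalerAl. Qed.
Lemma linL (y : L) a u v : y * (a *: u + v) = a *: (y * u) + y * v.
Proof. by rewrite mulrDr scalerAr. Qed.

Lemma injR (y : L) : y != 0 -> injective (fun a => a * y).
Proof.
move=> /hdiv [z [yz _]] a b /= e.
by rewrite -(mulr1 a) -(mulr1 b) -yz !mulrA e.
Qed.
Lemma injL (y : L) : y != 0 -> injective (fun a => y * a).
Proof.
move=> /hdiv [z [_ zy]] a b /= e.
by rewrite -(mul1r a) -(mul1r b) -zy -!mulrA e.
Qed.

Definition rm A y := img (fun a => a * y) A.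
Definition lm y B := img (fun b => y * b) B.

Lemma rm_dim A d y : y != 0 -> has_dim A d -> has_dim (rm A y) d.
Proof. by move=> nz; apply: img_dim; [apply: linR | apply: injR]. Qed.
Lemma lm_dim B d y : y != 0 -> has_dim B d -> has_dim (lm y B) d.
Proof. by move=> nz; apply: img_dim; [apply: linL | apply: injL]. Qed.
Lemma rm_sub A y : subspace A -> subspace (rm A y).
Proof. by apply: img_sub; apply: linR. Qed.
Lemma lm_sub B y : subspace B -> subspace (lm y B).
Proof. by apply: img_sub; apply: linL. Qed.

Definition rstab S := fun h => forall s, S s -> S (s * h).
Definition lstab S := fun h => forall s, S s -> S (h * s).

Lemma rstab_props S d : has_dim S d -> (0 < d)%N ->
  skew_subfield_over_K (rstab S) /\ exists dH, has_dim (rstab S) dH.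
Proof.
move=> hS dpos; have sS := has_dim_sub hS.
have hsub : subspace (rstab S).
  split; first by move=> s _; rewrite mulr0; apply: sub0.
  move=> a u v hu hv s Ss; rewrite linL; case: sS => _; apply; [exact: hu | exact: hv].
split; first split.
- move=> k s Ss; rewrite -scalerAr mulr1; exact: subZ.
- move=> x y hx hy; exact: (subB hsub).
- by move=> x y hx hy s Ss; rewrite mulrA; apply: hy; apply: hx.
- move=> x hx nz; have [z [xz zx]] := hdiv nz; exists z; split=> // s Ss.
  have e := rm_dim nz hS.
  have sub1 : forall v, rm S x v -> S v by move=> v [p [Sp ->]]; apply: hx.
  have [s' [Ss' ->]] := dim_eq_sub e hS sub1 Ss.
  by rewrite -mulrA xz mulr1.
have [s0 [Ss0 nz0]] := has_dim_nz hS dpos.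
have sub2 : forall v, lm s0 (rstab S) v -> S v by move=> v [p [hp ->]]; apply: hp.
have [e [he _]] := dim_ex (lm_sub s0 hsub) hS sub2.
have [z0 [s0z0 z0s0]] := hdiv nz0.
have hz0 : z0 != 0 by apply/eqP => z00; move: z0s0; rewrite z00 mul0r => /eqP; rewrite eq_sym oner_eq0.
exists e; apply: has_dim_ext (lm_dim hz0 he) _ => v; split.
  by case=> w [[p [hp ->]] ->]; rewrite mulrA z0s0 mul1r.
by move=> hv; exists (s0 * v); split; [exists v | rewrite mulrA z0s0 mul1r].
Qed.


Lemma lstab_props S d : has_dim S d -> (0 < d)%N ->
  skew_subfield_over_K (lstab S) /\ exists dH, has_dim (lstab S) dH.
Proof.
move=> hS dpos; have sS := has_dim_sub hS.
have hsub : subspace (lstab S).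
  split; first by move=> s _; rewrite mul0r; apply: sub0.
  move=> a u v hu hv s Ss; rewrite linR; case: sS => _; apply; [exact: hu | exact: hv].
split; first split.
- move=> k s Ss; rewrite -scalerAl mul1r; exact: subZ.
- move=> x y hx hy; exact: (subB hsub).
- by move=> x y hx hy s Ss; rewrite -mulrA; apply: hx; apply: hy.
- move=> x hx nz; have [z [xz zx]] := hdiv nz; exists z; split=> // s Ss.
  have e := lm_dim nz hS.
  have sub1 : forall v, lm x S v -> S v by move=> v [p [Sp ->]]; apply: hx.
  have [s' [Ss' ->]] := dim_eq_sub e hS sub1 Ss.
  by rewrite mulrA zx mul1r.
have [s0 [Ss0 nz0]] := has_dim_nz hS dpos.
have sub2 : forall v, rm (lstab S) s0 v -> S v by move=> v [p [hp ->]]; apply: hp.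
have [e [he _]] := dim_ex (rm_sub s0 hsub) hS sub2.
have [z0 [s0z0 z0s0]] := hdiv nz0.
have hz0 : z0 != 0 by apply/eqP => z00; move: z0s0; rewrite z00 mul0r => /eqP; rewrite eq_sym oner_eq0.
exists e; apply: has_dim_ext (rm_dim hz0 he) _ => v; split.
  by case=> w [[p [hp ->]] ->]; rewrite -mulrA s0z0 mulr1.
by move=> hv; exists (v * s0); split; [exists v | rewrite -mulrA s0z0 mulr1].
Qed.

Definition K1 := fun x : L => exists k : K, x = k%:A.

Lemma K1_props : skew_subfield_over_K K1 /\ has_dim K1 1.
Proof.
split; first split.
- by move=> k; exists k.
- by move=> x y [k ->] [l ->]; exists (k - l); rewrite scalerBl.
- by move=> x y [k ->] [l ->]; exists (k * l); rewrite -scalerAl mul1r scalerA.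
- move=> x [k ->] nz; have kz : k != 0 by apply: contraNneq nz => ->; rewrite scale0r.
  exists (k^-1)%:A; split; first by exists k^-1.
  + by rewrite -scalerAl mul1r scalerA divff // scale1r.
  + by rewrite -scalerAl mul1r scalerA mulVf // scale1r.
exists [:: 1]; split=> //.
  apply/indep_cons; split; first exact: indep_nil.
  by move/sp_nil/eqP; rewrite oner_eq0.
move=> x; rewrite sp_cons; split.
  by case=> k ->; exists k, 0; rewrite addr0; split=> //; apply/sp_nil.
by case=> a [w [/sp_nil -> ->]]; exists a; rewrite addr0.
Qed.

Lemma K1_act S : subspace S -> forall x, prodset K1 S x <-> S x.
Proof.
move=> hS x; split.
  by case=> h [s [[k ->] Ss ->]]; rewrite -scalerAl mul1r; apply: subZ.
by move=> Sx; exists 1, x; split=> //; [exists 1; rewrite scale1r | rewrite mul1r].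
Qed.

Lemma rstab_act S : forall x, prodset S (rstab S) x <-> S x.
Proof.
move=> x; split; first by case=> s [h [Ss hh ->]]; apply: hh.
by move=> Sx; exists x, 1; split=> //; [move=> s Ss; rewrite mulr1 | rewrite mulr1].
Qed.

Lemma lstab_act S : forall x, prodset (lstab S) S x <-> S x.
Proof.
move=> x; split; first by case=> h [s [hh Ss ->]]; apply: hh.
by move=> Sx; exists 1, x; split=> //; [move=> s Ss; rewrite mul1r | rewrite mul1r].
Qed.

Definition concl A B (dA dB : nat) :=
  exists (S H : L -> Prop) (dS dH : nat),
    [/\ subspace S /\ (forall x, S x -> spanK (prodset A B) x),
        has_dim S dS,
        skew_subfield_over_K H /\ has_dim H dH,
        (dA + dB <= dS + dH)%N
      & (forall x, prodset H S x <-> S x) \/ (forall x, prodset S H x <-> S x)].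

Lemma transfer A B A' B' dA dB dA' dB' :
  concl A' B' dA' dB' -> (forall x, prodset A' B' x -> spanK (prodset A B) x) ->
  (dA + dB <= dA' + dB')%N -> concl A B dA dB.
Proof.
move=> [S [H [dS [dH [[sS hS] h1 h2 h3 h4]]]]] hAB hle.
exists S, H, dS, dH; split=> //; last exact: leq_trans hle h3.
split=> // x /hS; apply: spanK_min => //; exact: spanK_sub.
Qed.

Lemma prod_span (sA sB : seq L) (a b : L) : span_seq sA a -> span_seq sB b ->
  span_seq [seq x * y | x <- sA, y <- sB] (a * b).
Proof.
set T := [seq _ | x <- sA, y <- sB].
move=> ha hb; pose Q := fun a => span_seq T (a * b).
have hQ : subspace Q.
  split; first by rewrite /Q mul0r; exact: sub0 (sp_subspace T).
  by move=> k u v hu hv; rewrite /Q linR; case: (sp_subspace T) => _; apply.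
apply: (sp_sub hQ) ha => x hx; rewrite /Q.
pose Q' := fun b => span_seq T (x * b).
have hQ' : subspace Q'.
  split; first by rewrite /Q' mulr0; exact: sub0 (sp_subspace T).
  by move=> k u v hu hv; rewrite /Q' linL; case: (sp_subspace T) => _; apply.
apply: (sp_sub hQ') hb => y hy; rewrite /Q'.
by apply: sp_mem; apply: allpairs_f.
Qed.

Lemma bounds A B C dA dB dC : has_dim A dA -> has_dim B dB -> has_dim C dC ->
  (0 < dA)%N -> (0 < dB)%N -> (forall x, spanK (prodset A B) x -> C x) ->
  (dA <= dC)%N /\ (dB <= dC)%N.
Proof.
move=> hA hB hC pA pB hAB.
have [a0 [Aa0 nza]] := has_dim_nz hA pA.
have [b0 [Bb0 nzb]] := has_dim_nz hB pB.
split.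
  apply: dim_le (rm_dim nzb hA) hC _ => x [a [Aa ->]]; apply: hAB; apply: spanK_mem.
  by exists a, b0.
apply: dim_le (lm_dim nza hB) hC _ => x [b [Bb ->]]; apply: hAB; apply: spanK_mem.
by exists a0, b.
Qed.

Lemma meas_lt m m' c b b' : (m' < m)%N -> (b' <= c)%N -> (m' * c.+1 + b' < m * c.+1 + b)%N.
Proof.
move=> h1 h2.
have : (m'.+1 * c.+1 <= m * c.+1)%N by rewrite leq_mul2r h1 orbT.
rewrite mulSn; set X := (m' * c.+1)%N; set Y := (m * c.+1)%N; arith.
Qed.

Lemma meas_le m m' c b b' : (m' <= m)%N -> (b' < b)%N -> (m' * c.+1 + b' < m * c.+1 + b)%N.
Proof.
move=> h1 h2.
have : (m' * c.+1 <= m * c.+1)%N by rewrite leq_mul2r h1 orbT.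
set X := (m' * c.+1)%N; set Y := (m * c.+1)%N; arith.
Qed.

Lemma nz_inv (y z : L) : z * y = 1 -> z != 0.
Proof. by move=> e; apply/eqP => z0; move: e; rewrite z0 mul0r => /eqP; rewrite eq_sym oner_eq0. Qed.

Lemma main_ind C dC : has_dim C dC -> forall n A B dA dB,
  has_dim A dA -> has_dim B dB -> (0 < dA)%N -> (0 < dB)%N ->
  (forall x, spanK (prodset A B) x -> C x) ->
  ((dC + dC - (dA + dB)) * dC.+1 + dB < n)%N -> concl A B dA dB.
Proof.
move=> hC; elim=> [|n IH] A B dA dB hA hB pA pB hAB hn //.
have sA := has_dim_sub hA; have sB := has_dim_sub hB.
have [bA bB] := bounds hA hB hC pA pB hAB.
have rec : forall A' B' dA' dB', has_dim A' dA' -> has_dim B' dB' ->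
   (0 < dA')%N -> (0 < dB')%N ->
   (forall x, prodset A' B' x -> spanK (prodset A B) x) ->
   ((dA + dB < dA' + dB')%N \/ ((dA + dB = dA' + dB')%N /\ (dB' < dB)%N)) ->
   concl A B dA dB.
  move=> A' B' dA' dB' hA' hB' pA' pB' hP hm.
  have hAB' : forall x, spanK (prodset A' B') x -> C x.
    move=> x hx; apply: hAB; apply: (spanK_min (spanK_sub _)) hx => y; exact: hP.
  have [bA' bB'] := bounds hA' hB' hC pA' pB' hAB'.
  apply: (transfer (IH A' B' dA' dB' hA' hB' pA' pB' hAB' _)) hP _.
    case: hm => [hlt | [heq hlt]].
      have : (dC + dC - (dA' + dB') < dC + dC - (dA + dB))%N by arith.
      move/meas_lt => /(_ dC dB dB' bB') h; arith.
    have : (dC + dC - (dA' + dB') <= dC + dC - (dA + dB))%N by arith.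
    move/meas_le => /(_ dC dB dB' hlt) h; arith.
  by case: hm => [/ltnW | [-> _]].
case: (classic (exists y, [/\ y != 0, exists x, [/\ x != 0, A x & rm A y x],
    exists x, [/\ x != 0, B x & lm y B x] &
    ~ ((forall a, A a -> A (a * y)) /\ (forall b, B b -> B (y * b)))]))
  => [[y [nzy [xa [nxa Axa rxa]] [xb [nxb Bxb lxb]] nst]] | stuck].
  have [z [yz zy]] := hdiv nzy.
  have nzz := nz_inv zy.
  have hAy := rm_dim nzy hA; have hyB := lm_dim nzy hB.
  have [dSA [dIA [hSA hIA gA]]] := grass hA hAy.
  have [dSB [dIB [hSB hIB gB]]] := grass hB hyB.
  have le1 : (dA <= dSA)%N.
    by apply: dim_le hA hSA _ => v Av; exists v, 0; rewrite addr0; split=> //; exact: sub0 (rm_sub y sA).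
  have le2 : (dIB <= dB)%N by apply: dim_le hIB hB _ => v [].
  have le3 : (dB <= dSB)%N.
    by apply: dim_le hB hSB _ => v Bv; exists v, 0; rewrite addr0; split=> //; exact: sub0 (lm_sub y sB).
  have le4 : (dIA <= dA)%N by apply: dim_le hIA hA _ => v [].
  have pIA : (0 < dIA)%N by apply: dim_pos hIA (conj Axa rxa) nxa.
  have pIB : (0 < dIB)%N by apply: dim_pos hIB (conj Bxb lxb) nxb.
  pose A1 := addsp A (rm A y); pose B1 := fun b => B b /\ B (y * b).
  have hB1 : has_dim B1 dIB.
    apply: has_dim_ext (lm_dim nzz hIB) _ => v; split.
      case=> w [[Bw [p [Bp ew]]] ->]; split; first by rewrite ew mulrA zy mul1r.
      by rewrite mulrA yz mul1r.
    move=> [Bv Byv]; exists (y * v); split; first by split=> //; exists v.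
    by rewrite mulrA zy mul1r.
  have hP1 : forall x, prodset A1 B1 x -> spanK (prodset A B) x.
    move=> x [u [b [[a1 [q [Aa1 [a2 [Aa2 ->]] ->]]] [Bb Byb] ->]]].
    rewrite mulrDl -mulrA; apply: subD (spanK_sub _) _ _; apply: spanK_mem.
      by exists a1, b.
    by exists a2, (y * b).
  pose A2 := fun a => A a /\ A (a * y); pose B2 := addsp B (lm y B).
  have hA2 : has_dim A2 dIA.
    apply: has_dim_ext (rm_dim nzz hIA) _ => v; split.
      case=> w [[Aw [p [Ap ew]]] ->]; split; first by rewrite ew -mulrA yz mulr1.
      by rewrite -mulrA zy mulr1.
    move=> [Av Avy]; exists (v * y); split; first by split=> //; exists v.
    by rewrite -mulrA yz mulr1.
  have hP2 : forall x, prodset A2 B2 x -> spanK (prodset A B) x.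
    move=> x [a [u [[Aa Aay] [b1 [q [Bb1 [b2 [Bb2 ->]] ->]]] ->]]].
    rewrite mulrDr mulrA; apply: subD (spanK_sub _) _ _; apply: spanK_mem.
      by exists a, b1.
    by exists (a * y), b2.
  case: (ltnP (dA + dB) (dSA + dIB)) => c1.
    apply: (rec A1 B1 dSA dIB) => //; last by left.
    by apply: leq_trans le1.
  case: (ltnP (dA + dB) (dIA + dSB)) => c2.
    apply: (rec A2 B2 dIA dSB) => //; last by left.
    by apply: leq_trans le3.
  case: (ltnP dIB dB) => c3.
    apply: (rec A1 B1 dSA dIB) => //; first by apply: leq_trans le1.
    by right; split=> //; arith.
  exfalso; apply: nst; split.
    have eSA : dSA = dA by arith.
    rewrite eSA in hSA.
    move=> a Aa; have sub1 : forall v, A v -> A1 v.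
      by move=> v Av; exists v, 0; rewrite addr0; split=> //; exact: sub0 (rm_sub y sA).
    apply: (dim_eq_sub hA hSA sub1); exists 0, (a * y); rewrite add0r; split=> //.
      exact: sub0.
    by exists a.
  have eIB : dIB = dB by arith.
  rewrite eIB in hIB.
  move=> b Bb; have sub1 : forall v, cap B (lm y B) v -> lm y B v by move=> v [].
  have [] := dim_eq_sub hIB hyB sub1 (ex_intro _ b (conj Bb erefl)).
  done.
have st : forall y, y != 0 -> (exists x, [/\ x != 0, A x & rm A y x]) ->
    (exists x, [/\ x != 0, B x & lm y B x]) ->
    (forall a, A a -> A (a * y)) /\ (forall b, B b -> B (y * b)).
  move=> y h1 h2 h3; apply: NNPP => h4; apply: stuck; exists y; split=> //.
have [a0 [Aa0 nza]] := has_dim_nz hA pA; have [b0 [Bb0 nzb]] := has_dim_nz hB pB.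
have [za [a0za zaa0]] := hdiv nza; have [zb [b0zb zbb0]] := hdiv nzb.
have nzza := nz_inv zaa0; have nzzb := nz_inv zbb0.
case: (classic (forall b, B b -> rstab A (b * zb))) => ci.
  pose S := rm A b0; have hS := rm_dim nzb hA.
  have [sf [dH hH]] := rstab_props hS pA.
  exists S, (rstab S), dA, dH; split=> //.
  - split; first exact: has_dim_sub hS.
    by move=> x [a [Aa ->]]; apply: spanK_mem; exists a, b0.
  - have : (dB <= dH)%N.
      apply: dim_le (lm_dim nzzb hB) hH _ => v [b [Bb ->]] s [a [Aa ->]].
      exists (a * (b * zb)); split; first exact: ci b Bb a Aa.
      by rewrite -!mulrA; congr (_ * _); rewrite (mulrA b0 zb b) b0zb mul1r zbb0 mulr1.
    by arith.
  - by right; apply: rstab_act.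
case: (classic (forall a, A a -> lstab B (za * a))) => cii.
  pose S := lm a0 B; have hS := lm_dim nza hB.
  have [sf [dH hH]] := lstab_props hS pB.
  exists S, (lstab S), dB, dH; split=> //.
  - split; first exact: has_dim_sub hS.
    by move=> x [b [Bb ->]]; apply: spanK_mem; exists a0, b.
  - have : (dA <= dH)%N.
      apply: dim_le (rm_dim nzza hA) hH _ => v [a [Aa ->]] s [b [Bb ->]].
      exists (za * a * b); split; first exact: cii a Aa b Bb.
      by rewrite !mulrA -(mulrA a) zaa0 mulr1 a0za mul1r.
    by arith.
  - by left; apply: lstab_act.
have [b1 [Bb1 nb1]] : exists b1, B b1 /\ ~ rstab A (b1 * zb).
  apply: NNPP => h; apply: ci => b Bb; apply: NNPP => hb; apply: h; by exists b.
have [a1 [Aa1 na1]] : exists a1, A a1 /\ ~ lstab B (za * a1).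
  apply: NNPP => h; apply: cii => a Aa; apply: NNPP => ha; apply: h; by exists a.
have nzb1 : b1 != 0.
  apply/eqP => e; apply: nb1; rewrite e mul0r => s As; rewrite mulr0; exact: sub0.
have nza1 : a1 != 0.
  apply/eqP => e; apply: na1; rewrite e mulr0 => s Bs; rewrite mul0r; exact: sub0.
have cap1 : forall x, cap (rm A b0) (rm A b1) x -> x = 0.
  move=> x [[a [Aa ex]] [a' [Aa' ex']]]; apply: NNPP => nx.
  have ny : b1 * zb != 0.
    apply/eqP => e; apply: nx; rewrite ex' -(mulr1 b1) -zbb0 mulrA e mul0r mulr0 //.
  apply: nb1; apply: (fun e1 e2 => (st _ ny e1 e2).1).
    exists a; split=> //.
      by apply/eqP => a00; apply: nx; rewrite ex a00 mul0r.
    by exists a'; rewrite mulrA -ex' ex -mulrA b0zb mulr1.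
  exists b1; split=> //; exists b0; by rewrite -mulrA zbb0 mulr1.
have cap2 : forall x, cap (lm a0 B) (lm a1 B) x -> x = 0.
  move=> x [[b [Bb ex]] [b' [Bb' ex']]]; apply: NNPP => nx.
  have ny : za * a1 != 0.
    apply/eqP => e; apply: nx; rewrite ex' -(mul1r a1) -a0za -mulrA e mulr0 mul0r //.
  apply: na1; apply: (fun e1 e2 => (st _ ny e1 e2).2).
    exists a1; split=> //; exists a0; by rewrite mulrA a0za mul1r.
  exists b; split=> //.
    by apply/eqP => b00; apply: nx; rewrite ex b00 mulr0.
  by exists b'; rewrite -mulrA -ex' ex mulrA zaa0 mul1r.
have [K1f K1d] := K1_props.
case: (leqP dB dA) => cmp.
  have [ds [dc [hs hc g1]]] := grass (rm_dim nzb hA) (rm_dim nzb1 hA).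
  have dc0 : (dc <= 0)%N := dim_le hc (@dim_zero K L) cap1.
  exists (addsp (rm A b0) (rm A b1)), K1, ds, 1%N; split=> //.
  - split; first exact: has_dim_sub hs.
    move=> x [p [q [[a [Aa ->]] [a' [Aa' ->]] ->]]].
    by apply: subD (spanK_sub _) _ _; apply: spanK_mem; [exists a, b0 | exists a', b1].
  - by arith.
  - by left; apply: K1_act; exact: has_dim_sub hs.
have [ds [dc [hs hc g1]]] := grass (lm_dim nza hB) (lm_dim nza1 hB).
have dc0 : (dc <= 0)%N := dim_le hc (@dim_zero K L) cap2.
exists (addsp (lm a0 B) (lm a1 B)), K1, ds, 1%N; split=> //.
- split; first exact: has_dim_sub hs.
  move=> x [p [q [[b [Bb ->]] [b' [Bb' ->]] ->]]].
  by apply: subD (spanK_sub _) _ _; apply: spanK_mem; [exists a0, b | exists a1, b'].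
- by arith.
- by left; apply: K1_act; exact: has_dim_sub hs.
Qed.
End Alg.

Unset Implicit Arguments.

(* L : algType K encodes that K (via k |-> k%:A) lies in the center of L;
   the hypothesis hdiv makes L a division ring. *)
Theorem mainTheorem6 (K : fieldType) (L : algType K)
  (hdiv : forall x : L, x != 0 -> exists y : L, x * y = 1 /\ y * x = 1)
  (A B : L -> Prop) (dA dB : nat) :
  has_dim A dA -> has_dim B dB -> (0 < dA)%N -> (0 < dB)%N ->
  exists (S H : L -> Prop) (dS dH : nat),
    [/\ subspace S /\ (forall x, S x -> spanK (prodset A B) x),
        has_dim S dS,
        skew_subfield_over_K H /\ has_dim H dH,
        (dA + dB <= dS + dH)%N
      & (forall x, prodset H S x <-> S x) \/ (forall x, prodset S H x <-> S x)].
Proof.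
move=> hA hB pA pB.
have [sA [_ _ eA]] := hA; have [sB [_ _ eB]] := hB.
have hsub : forall x, spanK (prodset A B) x -> span_seq [seq x * y | x <- sA, y <- sB] x.
  apply: spanK_min; first exact: sp_subspace.
  by move=> x [a [b [Aa Bb ->]]]; apply: prod_span; [apply/eA | apply/eB].
have [t [ht _ et]] := fd_sub (spanK_sub (prodset A B)) hsub.
have hC : has_dim (spanK (prodset A B)) (size t) by exists t.
exact: (@main_ind K L hdiv _ _ hC _ A B dA dB hA hB pA pB (fun x h => h) (ltnSn _)).
Qed.
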